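(* Let $G$ be a connected non-regular graph with $n$ vertices, $m$ edges, maximum degree $\Delta$ and minimum degree $\delta$, and put $D=(\Delta-\delta)^2$. Then (i) if $n\le\frac{4m(\sqrt{1+D}-1)}{D}$, $$QE(G)\ <\ \frac{2m}{n}+\sqrt{(n-1)\Big[2m+\frac n4D-\Big(\frac{2m}{n}\Big)^2\Big]};$$ (ii) if $n>\frac{4m(\sqrt{1+D}-1)}{D}$, $$QE(G)\ <\ \sqrt{\frac{2m}{n}+\frac14D}+\sqrt{(n-1)\Big(2m+\frac{n-1}{4}D-\frac{2m}{n}\Big)}.$$
   Context: All graphs are finite, simple and undirected. For a graph $G$ with $n$ vertices and $m$ edges, let $q_1\ge\cdots\ge q_n\ge0$ be the eigenvalues of the signless Laplacian $Q(G)=D(G)+A(G)$ (degree diagonal matrix plus adjacency matrix). The signless Laplacian energy is $QE(G)=\sum_{i=1}^n|q_i-\frac{2m}{n}|$. *)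

(* Defs.v *)
From HB Require Import structures.
From mathcomp Require Import all_boot all_order all_algebra.
Set Implicit Arguments. Unset Strict Implicit. Unset Printing Implicit Defensive.
Import Order.TTheory GRing.Theory Num.Theory.
Local Open Scope ring_scope.

Definition simple_graph (n : nat) (e : rel 'I_n) : Prop :=
  symmetric e /\ irreflexive e.

Definition deg (n : nat) (e : rel 'I_n) (x : 'I_n) : nat := #|[set y | e x y]|.

Definition edges (n : nat) (e : rel 'I_n) : {set {set 'I_n}} :=
  [set E : {set 'I_n} | [exists x, exists y, e x y && (E == [set x; y])]].

Definition nedges (n : nat) (e : rel 'I_n) : nat := #|edges e|.

Definition maxdeg (n : nat) (e : rel 'I_n) : nat := (\max_(x : 'I_n) deg e x)%N.
Definition mindeg (n : nat) (e : rel 'I_n) : nat :=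
  \big[minn/n]_(x : 'I_n) deg e x.

Definition connected_graph (n : nat) (e : rel 'I_n) : Prop :=
  (0 < n)%N /\ forall x y : 'I_n, connect e x y.

Definition regular_graph (n : nat) (e : rel 'I_n) : Prop :=
  forall x y : 'I_n, deg e x = deg e y.

Definition signlessQ (R : nzRingType) (n : nat) (e : rel 'I_n) : 'M[R]_n :=
  \matrix_(i, j) ((deg e i)%:R * (i == j)%:R + (e i j)%:R).

(* s is the multiset of eigenvalues of Q (with multiplicity) *)
Definition is_spectrum (R : comNzRingType) (n : nat) (M : 'M[R]_n) (s : seq R) : Prop :=
  char_poly M = \prod_(x <- s) ('X - x%:P).

Definition QE (R : realFieldType) (n : nat) (e : rel 'I_n) (s : seq R) : R :=
  \sum_(q <- s) `|q - (2 * (nedges e)%:R) / n%:R|.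

(* Main.v *)
Require Import Defs.
From HB Require Import structures.
From mathcomp Require Import all_boot all_order all_algebra.
From mathcomp Require Import reals.
From mathcomp Require Import sesquilinear spectral complex.
From mathcomp Require Import ring lra zify.
Set Implicit Arguments. Unset Strict Implicit. Unset Printing Implicit Defensive.
Import Order.TTheory GRing.Theory Num.Theory.
Local Open Scope ring_scope.


Section Graph.
Variables (n : nat) (e : rel 'I_n).
Hypothesis (esym : symmetric e) (eirr : irreflexive e).

Lemma set2_inv (x y a b : 'I_n) : x != y -> [set x; y] = [set a; b] ->
  (x == a) && (y == b) || (x == b) && (y == a).
Proof.
move=> nxy E.
have hx : x \in [set a; b] by rewrite -E !inE eqxx.
have hy : y \in [set a; b] by rewrite -E !inE eqxx orbT.
move: hx hy nxy; rewrite !inE.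
clear E; by case/orP=> /eqP ->; case/orP=> /eqP ->; rewrite ?eqxx ?orbT.
Qed.

Lemma handshake : (\sum_i deg e i = 2 * nedges e)%N.
Proof.
pose A := [set p : 'I_n * 'I_n | e p.1 p.2].
have -> : (\sum_i deg e i = #|A|)%N.
  rewrite -sum1_card (eq_bigl (fun p : 'I_n * 'I_n => xpredT p.1 && e p.1 p.2));
    last by move=> p; rewrite inE.
  rewrite -(pair_big_dep xpredT (fun i j => e i j) (fun _ _ => 1%N)) /=.
  apply: eq_bigr => i _.
  by rewrite /deg -sum1_card; apply: eq_bigl => j; rewrite inE.
rewrite -sum1_card /nedges.
rewrite (partition_big (fun p : 'I_n * 'I_n => [set p.1; p.2]) (mem (edges e))) /=;
  last first.
  by move=> [x y]; rewrite !inE /= => exy; apply/existsP; exists x; apply/existsP; exists y; rewrite exy eqxx.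
rewrite mulnC -sum_nat_const; apply: eq_bigr => E.
rewrite inE => /existsP[a /existsP[b /andP[eab /eqP ->]]].
have nab : a != b by apply: contraTneq eab => ->; rewrite eirr.
rewrite (bigD1 (a, b)) /=; last by rewrite !inE eab eqxx.
rewrite (bigD1 (b, a)) /=; last first.
  rewrite !inE esym eab /= xpair_eqE eq_sym (negbTE nab) andbF andbT.
  by apply/eqP/setP => z; rewrite !inE orbC.
rewrite big1 // => [[x y]] /andP[/andP[/andP[]]]; rewrite inE /= => exy /eqP E2.
rewrite !xpair_eqE => h1 h2.
have nxy : x != y by apply: contraTneq exy => ->; rewrite eirr.
by case/orP: (set2_inv nxy E2) => H; [move: h1 | move: h2]; rewrite H.
Qed.

Section R.
Variable R : comNzRingType.
Local Notation Q := (signlessQ R e).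

Lemma QE_ij i j : Q i j = (deg e i)%:R * (i == j)%:R + (e i j)%:R.
Proof. by rewrite /signlessQ mxE. Qed.

Lemma Qsym : Q^T = Q.
Proof.
apply/matrixP => i j; rewrite mxE !QE_ij esym.
by case: (eqVneq i j) => [->|ne]; rewrite ?eqxx // !mulr0.
Qed.

Lemma degE i : (deg e i)%:R = \sum_j (e i j)%:R :> R.
Proof.
rewrite /deg -sum1_card big_mkcond /= natr_sum; apply: eq_bigr => j _.
by rewrite inE; case: (e i j).
Qed.

Lemma rowsumQ i : \sum_j Q i j = 2 * (deg e i)%:R.
Proof.
rewrite (eq_bigr _ (fun j _ => QE_ij i j)) big_split /= -degE mulr_natl mulr2n; congr (_ + _).
rewrite (bigD1 i) //= eqxx mulr1 big1 ?addr0 // => j ne.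
by rewrite eq_sym (negbTE ne) mulr0.
Qed.

Lemma traceQ : \tr Q = \sum_i (deg e i)%:R.
Proof.
by apply: eq_bigr => i _; rewrite QE_ij eqxx eirr mulr1 addr0.
Qed.

Lemma sqQ c i : ((Q - c%:M) *m (Q - c%:M)) i i = ((deg e i)%:R - c) ^+ 2 + (deg e i)%:R.
Proof.
rewrite mxE (bigD1 i) //= !mxE eqxx eirr mulr1 addr0 mulr1n expr2; congr (_ + _).
rewrite [in RHS]degE [in RHS](bigD1 i) //= eirr add0r; apply: eq_bigr => j ne.
rewrite !mxE eq_sym (negbTE ne) !mulr0 !add0r mulr0n subr0 (esym j i).
by rewrite subr0; case: (e i j); rewrite ?mulr1 ?mulr0.
Qed.

End R.

End Graph.


Lemma char_poly_conj (F : comNzRingType) n (P P' D : 'M[F]_n) :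
  P' *m P = 1%:M -> char_poly (P' *m D *m P) = char_poly D.
Proof.
move=> PP; rewrite /char_poly /char_poly_mx.
have -> : 'X%:M - map_mx polyC (P' *m D *m P) =
   map_mx polyC P' *m ('X%:M - map_mx polyC D) *m map_mx polyC P.
  rewrite mulmxBr mulmxBl !map_mxM; congr (_ - _).
  by rewrite mul_mx_scalar -scalemxAl -map_mxM PP map_mx1 scalemx1.
rewrite !det_mulmx mulrC mulrA -det_mulmx.
rewrite det_mulmx [X in X * _]mulrC -det_mulmx -map_mxM PP map_mx1 det1 mul1r //.
Qed.

Section Spec.
Variable R : rcfType.
Local Notation C := (R[i]).
Local Notation toC := (real_complex R).
Local Open Scope sesquilinear_scope.

Lemma conj_toC (x : R) : (toC x)^* = toC x.
Proof. by apply/CrealP/complex_realP; exists x. Qed.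

Lemma map_toC_tc m p (M : 'M[R]_(m, p)) : (map_mx toC M)^t* = map_mx toC M^T.
Proof. by apply/matrixP => i j; rewrite !mxE conj_toC. Qed.

Variable n : nat.
Variables (A : 'M[R]_n) (s : seq R).
Hypothesis Asym : A^T = A.
Hypothesis Aspec : char_poly A = \prod_(x <- s) ('X - x%:P).

Definition Ac := map_mx toC A.
Definition Pm := spectralmx Ac.
Definition dg := spectral_diag Ac.

Lemma Ac_normal : Ac \is normalmx.
Proof.
by apply/normalmxP; rewrite /Ac map_toC_tc Asym.
Qed.

Lemma PP' : Pm *m Pm^t* = 1%:M.
Proof. exact/unitarymxP/spectral_unitarymx. Qed.

Lemma P'P : Pm^t* *m Pm = 1%:M.
Proof.
rewrite -invmx_unitary ?spectral_unitarymx //; exact: mulVmx (spectral_unit _).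
Qed.

Lemma Ac_eq : Ac = Pm^t* *m diag_mx dg *m Pm.
Proof.
rewrite -invmx_unitary ?spectral_unitarymx //; exact/orthomx_spectralP/Ac_normal.
Qed.

Lemma spec_perm : perm_eq (map toC s) [seq dg 0 i | i <- enum 'I_n].
Proof.
apply: prod_XsubC_eq.
have := congr1 (map_poly toC) Aspec; rewrite map_char_poly -/Ac Ac_eq char_poly_conj ?P'P //.
rewrite char_poly_trig ?diag_mx_is_trig // rmorph_prod /= => h.
rewrite !big_map.
transitivity (\prod_(i <- s) map_poly toC ('X - i%:P)).
  by apply: eq_bigr => i _; rewrite map_polyXsubC.
rewrite -h -enumT big_enum /=; apply: eq_bigr => i _; rewrite !mxE eqxx mulr1n //.
Qed.

Lemma memdg i : exists2 x, x \in s & dg 0 i = toC x.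
Proof.
have : dg 0 i \in map toC s.
  by rewrite (perm_mem spec_perm); apply/mapP; exists i; rewrite ?mem_enum.
by case/mapP => x xs ->; exists x.
Qed.

Lemma sum_spec (G : C -> C) : \sum_(x <- s) G (toC x) = \sum_i G (dg 0 i).
Proof.
rewrite -(big_map toC xpredT) (perm_big _ spec_perm) big_map big_enum //.
Qed.

Lemma shiftE c : Ac - (toC c)%:M = Pm^t* *m diag_mx (\row_i (dg 0 i - toC c)) *m Pm.
Proof.
have -> : diag_mx (\row_i (dg 0 i - toC c)) = diag_mx dg - (toC c)%:M.
  by apply/matrixP => i j; rewrite !mxE mulrnBl.
by rewrite mulmxBr mulmxBl -Ac_eq mul_mx_scalar -scalemxAl P'P scalemx1.
Qed.

Lemma tr_conj (X : 'M[C]_n) : \tr (Pm^t* *m X *m Pm) = \tr X.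
Proof. by rewrite mxtrace_mulC mulmxA PP' mul1mx. Qed.

Lemma trace1 : \sum_(x <- s) x = \tr A.
Proof.
apply: (@complexI R); rewrite rmorph_sum /= -trace_map_mx -/Ac.
have h := shiftE 0.
have e0 : Ac - (toC 0)%:M = Ac by apply/matrixP => i j; rewrite !mxE rmorph0 mul0rn subr0.
rewrite e0 in h; rewrite h.
rewrite tr_conj mxtrace_diag (sum_spec id); apply: eq_bigr => i _.
by rewrite mxE rmorph0 subr0.
Qed.

Lemma sq_shift c : (Ac - (toC c)%:M) *m (Ac - (toC c)%:M) =
  Pm^t* *m diag_mx (\row_i ((dg 0 i - toC c) ^+ 2)) *m Pm.
Proof.
rewrite shiftE -!mulmxA (mulmxA Pm) PP' mul1mx (mulmxA (diag_mx _)) mulmx_diag !mulmxA.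
by congr (_ *m diag_mx _ *m _); apply/rowP => i; rewrite !mxE expr2.
Qed.

Lemma trace2 c : \sum_(x <- s) (x - c) ^+ 2 = \tr ((A - c%:M) *m (A - c%:M)).
Proof.
apply: (@complexI R); rewrite rmorph_sum /= -trace_map_mx map_mxM map_mxB
  map_scalar_mx -/Ac sq_shift tr_conj mxtrace_diag.
rewrite (eq_bigr (fun x => (toC x - toC c) ^+ 2)); last first.
  by move=> x _; rewrite rmorphXn rmorphB.
rewrite (sum_spec (fun y => (y - toC c) ^+ 2)); apply: eq_bigr => i _.
by rewrite mxE.
Qed.

Lemma sq_const c r : (forall x, x \in s -> (x - c) ^+ 2 = r) ->
  (A - c%:M) *m (A - c%:M) = r%:M.
Proof.
move=> H.
suff h : map_mx toC ((A - c%:M) *m (A - c%:M)) = map_mx toC r%:M.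
  apply/matrixP => i j; have := congr1 (fun M : 'M[C]_n => M i j) h; rewrite !mxE.
  exact: (@complexI R).
rewrite map_mxM map_mxB !map_scalar_mx -/Ac sq_shift.
have -> : diag_mx (\row_i ((dg 0 i - toC c) ^+ 2)) = (toC r)%:M.
  apply/matrixP => i j; rewrite !mxE.
  have [x xs ->] := memdg i; rewrite -rmorphB -rmorphXn H //.
by rewrite mul_mx_scalar -scalemxAl P'P scalemx1.
Qed.

Lemma tcM m p k (X : 'M[C]_(m, p)) (Y : 'M[C]_(p, k)) : (X *m Y)^t* = Y^t* *m X^t*.
Proof. by rewrite trmx_mul map_mxM. Qed.

Lemma quadE (u : 'cV[R]_n) (M : 'M[C]_n) :
  (map_mx toC u)^T *m (Pm^t* *m M *m Pm) *m map_mx toC u =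
  (Pm *m map_mx toC u)^t* *m M *m (Pm *m map_mx toC u).
Proof.
by rewrite tcM map_toC_tc map_trmx !mulmxA.
Qed.

Lemma rayleigh (q : R) (u : 'cV[R]_n) : (forall x, x \in s -> x <= q) ->
  (u^T *m A *m u) 0 0 <= q * (u^T *m u) 0 0 /\
  ((u^T *m A *m u) 0 0 = q * (u^T *m u) 0 0 -> A *m u = q *: u).
Proof.
move=> Hq.
set w := Pm *m map_mx toC u.
have mE : forall m p (M : 'M[R]_(m, p)) i j, toC (M i j) = (map_mx toC M) i j.
  by move=> *; rewrite mxE.
have E1 : toC ((u^T *m A *m u) 0 0) = \sum_i (w i 0)^* * dg 0 i * w i 0.
  have -> : toC ((u^T *m A *m u) 0 0) = ((map_mx toC u)^T *m Ac *m map_mx toC u) 0 0.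
    by rewrite mE !map_mxM map_trmx.
  rewrite Ac_eq quadE mul_mx_diag mxE; apply: eq_bigr => i _.
  by rewrite !mxE.
have E2 : toC ((u^T *m u) 0 0) = \sum_i (w i 0)^* * w i 0.
  have -> : toC ((u^T *m u) 0 0) = ((map_mx toC u)^T *m (Pm^t* *m 1%:M *m Pm) *m map_mx toC u) 0 0.
    by rewrite mulmx1 P'P mulmx1 mE !map_mxM map_trmx.
  rewrite quadE mulmx1 mxE; apply: eq_bigr => i _.
  by rewrite !mxE.
have E3 : toC (q * (u^T *m u) 0 0 - (u^T *m A *m u) 0 0) =
    \sum_i ((toC q - dg 0 i) * ((w i 0) * (w i 0)^*)).
  rewrite rmorphB rmorphM /= E1 E2 mulr_sumr -sumrB; apply: eq_bigr => i _.
  by rewrite mulrBl; congr (_ - _); rewrite [w i 0 * _]mulrC !mulrA // [_ * dg 0 i]mulrC.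
have Hge : forall i : 'I_n, 0 <= (toC q - dg 0 i) * ((w i 0) * (w i 0)^*).
  move=> i; apply: mulr_ge0; last exact: mul_conjC_ge0.
  have [x xs ->] := memdg i; rewrite -rmorphB -(rmorph0 toC) lecR subr_ge0.
  exact: Hq.
split.
  rewrite -subr_ge0 -lecR rmorph0 E3; exact: sumr_ge0.
move=> Heq.
have H0 : forall i : 'I_n, (toC q - dg 0 i) * w i 0 = 0.
  move=> i.
  have hs : \sum_i ((toC q - dg 0 i) * ((w i 0) * (w i 0)^*)) = 0.
    by rewrite -E3 Heq subrr rmorph0.
  move: (@psumr_eq0P _ _ _ _ (fun i _ => Hge i) hs i isT) => /eqP.
  rewrite mulf_eq0 mul_conjC_eq0 => /orP[/eqP ->|/eqP ->]; by rewrite ?mul0r ?mulr0.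
have Dw : diag_mx dg *m w = toC q *: w.
  apply/matrixP => i j; rewrite ord1 mul_diag_mx !mxE.
  have := H0 i; rewrite /w mxE => h.
  by apply/eqP; rewrite -subr_eq0 -mulrBl -opprB mulNr oppr_eq0 h.
have : map_mx toC (A *m u) = map_mx toC (q *: u).
  rewrite map_mxM -/Ac Ac_eq -!mulmxA [diag_mx dg *m _]Dw -scalemxAr mulmxA P'P mul1mx.
  by apply/matrixP => i j; rewrite !mxE rmorphM.
move=> h; apply/matrixP => i j; have := congr1 (fun M : 'cV[C]_n => M i j) h.
rewrite !mxE; exact: (@complexI R).
Qed.

End Spec.




Section Real.
Variable R : rcfType.

Lemma sum_cst (T : Type) (t : seq T) (c : R) : \sum_(y <- t) c = c *+ size t.
Proof. by elim: t => [|a t IH]; rewrite ?big_nil ?big_cons ?IH ?mulrS. Qed.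

Lemma CS_seq (t : seq R) :
  (\sum_(y <- t) y) ^+ 2 <= (size t)%:R * \sum_(y <- t) y ^+ 2 /\
  ((\sum_(y <- t) y) ^+ 2 = (size t)%:R * \sum_(y <- t) y ^+ 2 ->
    forall y, y \in t -> (size t)%:R * y = \sum_(y <- t) y).
Proof.
set k : R := (size t)%:R; set T := \sum_(y <- t) y.
have id : \sum_(y <- t) (k * y - T) ^+ 2 = k * (k * \sum_(y <- t) y ^+ 2 - T ^+ 2).
  rewrite (eq_bigr (fun y => (k ^+ 2 * y ^+ 2 - 2 * k * T * y) + T ^+ 2)); last first.
    by move=> y _; rewrite sqrrB; ring.
  rewrite big_split /= sumrB -!mulr_sumr sum_cst -/T -/k -mulr_natr.
  ring.
have ge : 0 <= \sum_(y <- t) (k * y - T) ^+ 2 by apply: sumr_ge0 => y _; exact: sqr_ge0.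
have [k0|kpos] := eqVneq k 0.
  have t0 : t = [::] by move/eqP: k0; rewrite /k pnatr_eq0 => /eqP /size0nil.
  by rewrite /T /k t0 big_nil /= mul0r expr0n /=; split => // _ y.
have k_gt0 : 0 < k by rewrite lt_def kpos ler0n.
split.
  by rewrite -subr_ge0 -(pmulr_rge0 _ k_gt0) -id.
move=> heq y yt.
have : \sum_(y <- t) (k * y - T) ^+ 2 == 0 by rewrite id heq subrr mulr0.
rewrite psumr_eq0; last by move=> z _; exact: sqr_ge0.
move=> /allP /(_ y yt) /=; rewrite sqrf_eq0 subr_eq0 => /eqP //.
Qed.

Lemma final_i (N M d x T : R) : 2 <= N -> 0 <= d -> d < x -> M <= N * d ^+ 2 ->
  x ^+ 2 <= M -> T ^+ 2 <= (N - 1) * (M - x ^+ 2) -> 0 <= T ->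
  x + T < d + Num.sqrt ((N - 1) * (M - d ^+ 2)).
Proof.
move=> N2 d0 dx MN xM TT T0.
set A1 := Num.sqrt ((N - 1) * (M - x ^+ 2)).
set A2 := Num.sqrt ((N - 1) * (M - d ^+ 2)).
have dx2 : d ^+ 2 <= x ^+ 2 by nra.
have dx2' : d ^+ 2 < x ^+ 2 by nra.
have Mx : M < N * x ^+ 2 by nra.
have h1 : 0 <= (N - 1) * (M - x ^+ 2) by apply: mulr_ge0; lra.
have h2 : 0 <= (N - 1) * (M - d ^+ 2) by apply: mulr_ge0; lra.
have A1s : A1 ^+ 2 = (N - 1) * (M - x ^+ 2) by rewrite sqr_sqrtr.
have A2s : A2 ^+ 2 = (N - 1) * (M - d ^+ 2) by rewrite sqr_sqrtr.
have A10 : 0 <= A1 by exact: sqrtr_ge0.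
have A20 : 0 <= A2 by exact: sqrtr_ge0.
have TA1 : T <= A1.
  by rewrite -(ger0_norm T0) -sqrtr_sqr ler_sqrt.
have A1x : A1 < (N - 1) * x.
  rewrite -(ltr_pXn2r (_ : (0 < 2)%N)) ?nnegrE //; last by apply: mulr_ge0; lra.
  rewrite A1s exprMn.
  have : 0 < (N - 1) * (N * x ^+ 2 - M) by apply: mulr_gt0; lra.
  nra.
have A2d : A2 <= (N - 1) * d.
  rewrite -(ler_pXn2r (_ : (0 < 2)%N)) ?nnegrE //; last by apply: mulr_ge0; lra.
  rewrite A2s exprMn.
  have : 0 <= (N - 1) * (N * d ^+ 2 - M) by apply: mulr_ge0; lra.
  nra.
nra.
Qed.

Lemma final_ii (N m D QE : R) : 1 <= N -> 0 <= D -> 0 <= QE -> 0 <= m ->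
  QE ^+ 2 < N * (2 * m + N / 4 * D) ->
  QE < Num.sqrt (2 * m / N + D / 4)
       + Num.sqrt ((N - 1) * (2 * m + (N - 1) / 4 * D - 2 * m / N)).
Proof.
move=> N1 D0 Q0 m0 HQ.
have N0 : N != 0 by apply/eqP; lra.
set a := 2 * m / N + D / 4.
have a0 : 0 <= a.
  rewrite /a; apply: addr_ge0; last lra.
  apply: divr_ge0; lra.
have -> : (N - 1) * (2 * m + (N - 1) / 4 * D - 2 * m / N) = (N - 1) ^+ 2 * a.
  by rewrite /a; field.
rewrite sqrtrM ?sqr_ge0 // sqrtr_sqr ger0_norm; last lra.
have sa0 := sqrtr_ge0 a.
have sas : Num.sqrt a ^+ 2 = a by rewrite sqr_sqrtr.
have NM : N * (2 * m + N / 4 * D) = N ^+ 2 * a by rewrite /a; field.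
rewrite NM in HQ.
have : QE < N * Num.sqrt a.
  rewrite -(ltr_pXn2r (_ : (0 < 2)%N)) ?nnegrE //; last by apply: mulr_ge0; lra.
  by rewrite exprMn sas.
lra.
Qed.

Lemma cond_i (N m D : R) : 0 < N -> 0 < D ->
  N <= 4 * m * (Num.sqrt (1 + D) - 1) / D -> 2 * m + N / 4 * D <= N * (2 * m / N) ^+ 2.
Proof.
move=> N0 D0 H.
set sq := Num.sqrt (1 + D).
have sqs : sq ^+ 2 = 1 + D by rewrite sqr_sqrtr //; lra.
have sq0 : 0 <= sq by exact: sqrtr_ge0.
have sq1 : 1 < sq by nra.
have H1 : N * D <= 4 * m * (sq - 1).
  by rewrite -ler_pdivlMr //.
have H2 : N * (sq + 1) <= 4 * m.
  have : (sq - 1) * (N * (sq + 1)) <= (sq - 1) * (4 * m) by nra.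
  by rewrite ler_pM2l //; lra.
have -> : N * (2 * m / N) ^+ 2 = 4 * m ^+ 2 / N.
  by field; apply/eqP; lra.
rewrite ler_pdivlMr //.
nra.
Qed.

End Real.


Lemma seq_max (R : realDomainType) (t : seq R) : t != [::] ->
  exists2 q, q \in t & forall x, x \in t -> x <= q.
Proof.
elim: t => // a t IH _.
case: (eqVneq t [::]) => [->|tn].
  by exists a; rewrite ?mem_head // => x; rewrite inE => /eqP ->.
have [q qt qm] := IH tn.
case: (lerP a q) => aq.
  exists q; first by rewrite inE qt orbT.
  by move=> x; rewrite inE => /orP[/eqP ->|/qm].
exists a; first exact: mem_head.
move=> x; rewrite inE => /orP[/eqP ->|/qm xq] //; exact: (le_trans xq (ltW aq)).
Qed.

Lemma mindeg_le (n : nat) (e : rel 'I_n) i : (mindeg e <= deg e i)%N.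
Proof.
rewrite /mindeg; elim: (index_enum _) (mem_index_enum i) => // a r IH.
rewrite inE big_cons => /orP[/eqP <-|ir]; first exact: geq_minl.
exact: leq_trans (geq_minr _ _) (IH ir).
Qed.

Lemma deg_le_n (n : nat) (e : rel 'I_n) i : (deg e i <= n)%N.
Proof. by rewrite /deg (leq_trans (max_card _)) // card_ord. Qed.

Lemma mindeg_ex (n : nat) (e : rel 'I_n) : (0 < n)%N -> exists i, deg e i = mindeg e.
Proof.
move=> n0.
have : mindeg e = n \/ exists i, mindeg e = deg e i.
  rewrite /mindeg; apply: (big_ind (fun v => v = n \/ exists i, v = deg e i)) => //.
  - by left.
  - move=> x y hx hy; rewrite /minn; case: ltnP => _; [exact: hx | exact: hy].
  - by move=> i _; right; exists i.
case=> [h|[i ->]]; last by exists i.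
exists (Ordinal n0); apply/eqP; rewrite eqn_leq h deg_le_n /=.
by have := mindeg_le e (Ordinal n0); rewrite h.
Qed.

Lemma maxdeg_le (n : nat) (e : rel 'I_n) i : (deg e i <= maxdeg e)%N.
Proof. exact: bigop.leq_bigmax. Qed.

Lemma maxdeg_ex (n : nat) (e : rel 'I_n) : (0 < n)%N -> exists i, deg e i = maxdeg e.
Proof.
move=> n0; have c0 : (0 < #|'I_n|)%N by rewrite card_ord.
have [i hi] := @bigop.eq_bigmax _ (deg e) c0.
by exists i; rewrite /maxdeg hi.
Qed.

Theorem mainTheorem14 (R : realType) (n : nat) (e : rel 'I_n) (s : seq R) :
  simple_graph e -> connected_graph e -> ~ regular_graph e ->
  is_spectrum (signlessQ R e) s ->
  let nR : R := n%:R in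
  let mR : R := (nedges e)%:R in
  let D : R := ((maxdeg e)%:R - (mindeg e)%:R) ^+ 2 in
  (nR <= 4 * mR * (Num.sqrt (1 + D) - 1) / D ->
     QE e s < 2 * mR / nR
              + Num.sqrt ((nR - 1) * (2 * mR + nR / 4 * D - (2 * mR / nR) ^+ 2)))
  /\
  (4 * mR * (Num.sqrt (1 + D) - 1) / D < nR ->
     QE e s < Num.sqrt (2 * mR / nR + D / 4)
              + Num.sqrt ((nR - 1) * (2 * mR + (nR - 1) / 4 * D - 2 * mR / nR))).
Proof.
move=> [esym eirr] [n0 _] nreg spec nR mR D.
rewrite /is_spectrum in spec.
have Qs : (signlessQ R e)^T = signlessQ R e by apply: Qsym.
have h2m : \sum_i (deg e i)%:R = 2 * mR :> R.
  by rewrite -natr_sum (handshake esym eirr) natrM.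
have hsum : \sum_(x <- s) x = 2 * mR by rewrite (trace1 Qs spec) traceQ.
have hsize : size s = n.
  by have := size_char_poly (signlessQ R e); rewrite spec size_prod_XsubC => -[].
have htr c : \sum_(x <- s) (x - c) ^+ 2 =
    \sum_i (((deg e i)%:R - c) ^+ 2 + (deg e i)%:R).
  by rewrite (trace2 Qs spec); apply: eq_bigr => i _; rewrite sqQ.
have [iM hM] := maxdeg_ex e n0.
have [im hm] := mindeg_ex e n0.
have hlt : (mindeg e < maxdeg e)%N.
  rewrite ltnNge; apply/negP => hle; apply: nreg => x y.
  apply/eqP; rewrite eqn_leq.
  by rewrite !(leq_trans (maxdeg_le _ _) (leq_trans hle (mindeg_le _ _))).
have n2 : (2 <= n)%N.
  have ne : iM != im by apply: contraTneq hlt => eq; rewrite -hm -hM eq ltnn.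
  have := ltn_ord iM; have := ltn_ord im; move: ne; rewrite -(inj_eq (@ord_inj n)).
  move=> /eqP h1 h2 h3; lia.
set N := nR.
have N2 : 2 <= N by rewrite /N /nR (ler_nat R 2 n).
have N0 : N != 0 by apply/eqP; lra.
set Dl : R := (maxdeg e)%:R; set dl : R := (mindeg e)%:R.
have Dd : dl < Dl by rewrite /Dl /dl ltr_nat.
have DE : D = (Dl - dl) ^+ 2 by [].
have D0 : 0 < D by rewrite DE exprn_gt0 // subr_gt0.
set d := 2 * mR / N.
have m0 : 0 <= mR by rewrite /mR ler0n.
have d0 : 0 <= d by rewrite /d; apply: divr_ge0; lra.
have h2md : 2 * mR = N * d by rewrite /d; field.
have degb i : dl <= (deg e i)%:R <= Dl.
  by rewrite /dl /Dl !ler_nat mindeg_le maxdeg_le.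
have hV : \sum_i ((deg e i)%:R - d) ^+ 2 <= N * D / 4.
  apply: (le_trans (ler_sum _ (fun i _ =>
     (_ : ((deg e i)%:R - d) ^+ 2 <= (Dl + dl - 2 * d) * (deg e i)%:R + (d ^+ 2 - Dl * dl))))).
    move=> i; have /andP[h1 h2] := degb i; nra.
  rewrite big_split /= -mulr_sumr h2m sumr_const card_ord -[_ *+ n]mulr_natr -/nR -/N h2md.
  have Nn : 0 <= N by lra.
  have := mulr_ge0 Nn (sqr_ge0 (Dl + dl - 2 * d)).
  rewrite DE; nra.
set M := 2 * mR + N / 4 * D.
set S := \sum_(x <- s) (x - d) ^+ 2.
have SM : S <= M.
  rewrite /S htr big_split /= h2m /M; lra.
have QEd : QE e s = \sum_(x <- s) `|x - d| by [].
have QE0 : 0 <= QE e s by rewrite QEd; apply: sumr_ge0 => x _; exact: normr_ge0.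
have sq_abs (x : R) : `|x| ^+ 2 = x ^+ 2 by rewrite real_normK ?num_real.
have [CS1 CS2] := CS_seq [seq `|x - d| | x <- s].
rewrite size_map hsize -/nR -/N !big_map -QEd in CS1 CS2.
rewrite (eq_bigr (fun x => (x - d) ^+ 2)) -/S in CS1 CS2; last by move=> x _; rewrite sq_abs.
have sn : s != [::] by rewrite -size_eq0 hsize -lt0n.
have [q qs qm] := seq_max sn.
set u : 'cV[R]_n := const_mx 1.
have uQu : (u^T *m signlessQ R e *m u) 0 0 = 4 * mR.
  transitivity (\sum_j \sum_i signlessQ R e i j).
    rewrite mxE; apply: eq_bigr => j _; rewrite !mxE mulr1.
    by apply: eq_bigr => i _; rewrite !mxE mul1r.
  rewrite exchange_big /= (eq_bigr (fun i => 2 * (deg e i)%:R)); last first.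
    by move=> i _; rewrite rowsumQ.
  rewrite -mulr_sumr h2m.
  lra.
have uu : (u^T *m u) 0 0 = N.
  rewrite mxE (eq_bigr (fun _ => 1)); last by move=> i _; rewrite !mxE mulr1.
  by rewrite sumr_const card_ord.
have [Rle Req] := rayleigh Qs spec u qm.
rewrite uQu uu in Rle Req.
have hq : 4 * mR < q * N.
  rewrite lt_neqAle Rle andbT; apply/eqP => heq.
  have hQu := Req heq.
  apply: nreg => x y.
  have rs z : (deg e z)%:R = q / 2 :> R.
    have := congr1 (fun M : 'cV[R]_n => M z 0) hQu; rewrite !mxE.
    rewrite (eq_bigr (fun j => signlessQ R e z j)); last by move=> j _; rewrite !mxE mulr1.
    rewrite rowsumQ => h; lra.
  by apply/eqP; rewrite -(eqr_nat R) !rs.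
have q2d : d < q - d.
  have : 2 * d < q.
    rewrite /d mulrA -(ltr_pM2r (_ : 0 < N)); last lra.
    by rewrite mulfVK //; lra.
  lra.
split.
-
  move=> hcond.
  have MN : M <= N * d ^+ 2 by rewrite /M /d; apply: cond_i => //; lra.
  have [sp] := perm_to_rem qs.
  set rest := rem q s.
  have hQE : QE e s = (q - d) + \sum_(x <- rest) `|x - d|.
    by rewrite QEd (perm_big _ (perm_to_rem qs)) big_cons ger0_norm //; lra.
  have hS : S = (q - d) ^+ 2 + \sum_(x <- rest) (x - d) ^+ 2.
    by rewrite /S (perm_big _ (perm_to_rem qs)) big_cons.
  have [CR _] := CS_seq [seq `|x - d| | x <- rest].
  rewrite size_map size_rem // hsize !big_map in CR.
  rewrite [X in _ <= _ * X](eq_bigr (fun x => (x - d) ^+ 2)) in CR; last by move=> x _; rewrite sq_abs.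
  have n1 : (n.-1)%:R = N - 1 by rewrite /N /nR -subn1 natrB // ltnW.
  rewrite n1 in CR.
  have rest0 : 0 <= \sum_(x <- rest) (x - d) ^+ 2 by apply: sumr_ge0 => x _; exact: sqr_ge0.
  have T0 : 0 <= \sum_(x <- rest) `|x - d| by apply: sumr_ge0 => x _; exact: normr_ge0.
  rewrite hQE; apply: final_i => //; try lra.
  apply: (le_trans CR); apply: ler_wpM2l; lra.
-
  move=> _.
  apply: final_ii => //; try lra.
  have QM : QE e s ^+ 2 <= N * M by apply: (le_trans CS1); apply: ler_wpM2l; lra.
  rewrite lt_neqAle QM andbT -/M; apply/eqP => heq.
  have SeM : S = M.
    apply/eqP; rewrite eq_le SM /=.
    rewrite -(ler_pM2l (_ : 0 < N)); last lra.
    by rewrite -heq.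
  have heq2 : QE e s ^+ 2 = N * S by rewrite SeM.
  have all_eq := CS2 heq2.
  set c := QE e s / N.
  have hc : forall x, x \in s -> (x - d) ^+ 2 = c ^+ 2.
    move=> x xs.
    have := all_eq `|x - d| (map_f _ xs); rewrite -sq_abs => h.
    by rewrite /c -h mulrAC divff ?mul1r.
  have hsq := sq_const Qs spec hc.
  have hdeg z : ((deg e z)%:R - d) ^+ 2 + (deg e z)%:R = c ^+ 2.
    by have := congr1 (fun M : 'M[R]_n => M z z) hsq; rewrite sqQ // mxE eqxx mulr1n.
  have SNc : S = N * c ^+ 2.
    by rewrite /S (eq_big_seq _ hc) sum_cst hsize -mulr_natl.
  have ha := hdeg iM; have hb := hdeg im.
  rewrite hM -/Dl in ha; rewrite hm -/dl in hb.
  have cD : c ^+ 2 = d + D / 4.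
    have : N * c ^+ 2 = N * (d + D / 4) by rewrite -SNc SeM /M h2md; field.
    by move/(mulfI N0).
  set a := Dl - d; set b := dl - d.
  have hab : (a - b) * (a + b + 1) = 0.
    rewrite /a /b; nra.
  have ab0 : a - b != 0 by rewrite /a /b; apply/eqP; lra.
  move/eqP: hab; rewrite mulf_eq0 (negbTE ab0) /= => /eqP hab.
  have hD : D = (a - b) ^+ 2 by rewrite DE /a /b; congr (_ ^+ 2); ring.
  have : a ^+ 2 + a = (a - b) ^+ 2 / 4.
    rewrite -hD; rewrite /a in ha *; lra.
  have -> : b = - 1 - a by lra.
  move=> h; have : (a - (-1 - a)) ^+ 2 = 4 * a ^+ 2 + 4 * a + 1 by ring.
  lra.
Qed.
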